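(* The forgetful functor $U\colon \mathbf{Lens}\to\mathbf{Cat}$ preserves and reflects monomorphisms: a lens $M$ is a monomorphism in $\mathbf{Lens}$ if and only if its get functor $UM$ is a monomorphism in $\mathbf{Cat}$.
   Context: $\mathbf{Cat}$ is the category of small categories and functors. A lens $F\colon \mathbf{A}\to\mathbf{B}$ between small categories consists of a functor $F\colon\mathbf{A}\to\mathbf{B}$ (the get functor) together with, for each object $A$ of $\mathbf{A}$, a function $\varphi_{F,A}$ from the set of morphisms of $\mathbf{B}$ with domain $FA$ to the set of morphisms of $\mathbf{A}$ with domain $A$ (the put functions), such that: $F(\varphi_{F,A}b)=b$; $\varphi_{F,A}(\mathrm{id}_{FA})=\mathrm{id}_A$; and $\varphi_{F,A}(b'\circ b)=\varphi_{F,A'}(b')\circ\varphi_{F,A}(b)$ whenever $b$ has domain $FA$, $A'$ is the codomain of $\varphi_{F,A}b$, and $b'$ has domain $FA'$. $\mathbf{Lens}$ is the category of small categories and lenses; the composite of $F\colon\mathbf{A}\to\mathbf{B}$ and $G\colon\mathbf{B}\to\mathbf{C}$ has get functor $G\circ F$ and put functions $\varphi_{G\circ F,A}(c)=\varphi_{F,A}(\varphi_{G,FA}(c))$. $U\colon\mathbf{Lens}\to\mathbf{Cat}$ is the identity-on-objects functor sending a lens to its get functor. *)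

(* Defs.v *)
From Stdlib Require Import Utf8.

Set Implicit Arguments.

(** Small categories, single-sorted presentation: a type of objects, a type
    of morphisms, domain/codomain maps, identities, and a composition
    [comp g f] (= g ∘ f), whose value is only constrained when
    [cod f = dom g]. *)
Record Cat := {
  Ob : Type;
  Mor : Type;
  dom : Mor -> Ob;
  cod : Mor -> Ob;
  idm : Ob -> Mor;
  comp : Mor -> Mor -> Mor;
  dom_id : forall x, dom (idm x) = x;
  cod_id : forall x, cod (idm x) = x;
  dom_comp : forall f g, cod f = dom g -> dom (comp g f) = dom f;
  cod_comp : forall f g, cod f = dom g -> cod (comp g f) = cod g;
  comp_id_r : forall f, comp f (idm (dom f)) = f;
  comp_id_l : forall f, comp (idm (cod f)) f = f;
  comp_assoc : forall f g h, cod f = dom g -> cod g = dom h ->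
    comp h (comp g f) = comp (comp h g) f
}.

Arguments dom {c} _.
Arguments cod {c} _.
Arguments idm {c} _.
Arguments comp {c} _ _.

Record Functor (A B : Cat) := {
  fo : Ob A -> Ob B;
  fm : Mor A -> Mor B;
  fm_dom : forall f, dom (fm f) = fo (dom f);
  fm_cod : forall f, cod (fm f) = fo (cod f);
  fm_id : forall x, fm (idm x) = idm (fo x);
  fm_comp : forall f g, cod f = dom g -> fm (comp g f) = comp (fm g) (fm f)
}.

Arguments fo {A B} _ _.
Arguments fm {A B} _ _.

Definition functor_eq (A B : Cat) (F G : Functor A B) : Prop :=
  (forall x, fo F x = fo G x) /\ (forall f, fm F f = fm G f).

Definition fcomp (A B C : Cat) (G : Functor B C) (F : Functor A B) : Functor A C.
Proof.
  refine {| fo := fun x => fo G (fo F x); fm := fun f => fm G (fm F f) |}.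
  - intro f. rewrite fm_dom, fm_dom. reflexivity.
  - intro f. rewrite fm_cod, fm_cod. reflexivity.
  - intro x. rewrite fm_id, fm_id. reflexivity.
  - intros f g H. rewrite fm_comp by exact H.
    apply fm_comp. rewrite fm_cod, fm_dom, H. reflexivity.
Defined.

(** Lenses.  The put function [put x b] is only meaningful (and only
    constrained) when [dom b = fo get x]; its value elsewhere is junk and is
    ignored by [lens_eq]. *)
Record Lens (A B : Cat) := {
  get : Functor A B;
  put : Ob A -> Mor B -> Mor A;
  put_dom : forall x b, dom b = fo get x -> dom (put x b) = x;
  put_get : forall x b, dom b = fo get x -> fm get (put x b) = b;
  put_id : forall x, put x (idm (fo get x)) = idm x;
  put_comp : forall x b b', dom b = fo get x ->
    dom b' = fo get (cod (put x b)) ->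
    put x (comp b' b) = comp (put (cod (put x b)) b') (put x b)
}.

Arguments get {A B} _.
Arguments put {A B} _ _ _.

Definition lens_eq (A B : Cat) (L K : Lens A B) : Prop :=
  functor_eq (get L) (get K) /\
  (forall x b, dom b = fo (get L) x -> put L x b = put K x b).

Definition lcomp (A B C : Cat) (G : Lens B C) (F : Lens A B) : Lens A C.
Proof.
  refine {| get := fcomp (get G) (get F);
            put := fun x c => put F x (put G (fo (get F) x) c) |}.
  - intros x c H. apply put_dom. apply put_dom. exact H.
  - intros x c H. simpl. rewrite put_get. 2: apply put_dom; exact H.
    apply put_get. exact H.
  - intro x. simpl. rewrite put_id. apply put_id.
  - intros x c c' H H'. simpl in *.
    assert (HG : dom (put G (fo (get F) x) c) = fo (get F) x)
      by (apply put_dom; exact H).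
    assert (Hc : cod (put G (fo (get F) x) c)
                 = fo (get F) (cod (put F x (put G (fo (get F) x) c)))).
    { transitivity (cod (fm (get F) (put F x (put G (fo (get F) x) c)))).
      - rewrite (put_get F x _ HG). reflexivity.
      - apply fm_cod. }
    rewrite (put_comp G (fo (get F) x) c c' H) by (rewrite Hc; exact H').
    rewrite Hc. apply put_comp.
    + exact HG.
    + apply put_dom. exact H'.
Defined.

Definition mono_Cat (A B : Cat) (F : Functor A B) : Prop :=
  forall (X : Cat) (G H : Functor X A),
    functor_eq (fcomp F G) (fcomp F H) -> functor_eq G H.

Definition mono_Lens (A B : Cat) (M : Lens A B) : Prop :=
  forall (X : Cat) (G H : Lens X A),
    lens_eq (lcomp M G) (lcomp M H) -> lens_eq G H.

Definition U (A B : Cat) (M : Lens A B) : Functor A B := get M.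

(* Main.v *)
Require Import Defs.
From Stdlib Require Import ProofIrrelevance ClassicalEpsilon.

Section KP.
Variables (A B : Cat) (M : Functor A B).

Definition PO := {p : Ob A * Ob A | fo M (fst p) = fo M (snd p)}.
Definition PM := {p : Mor A * Mor A | fm M (fst p) = fm M (snd p)}.

Lemma PO_eq (x y : PO) : proj1_sig x = proj1_sig y -> x = y.
Proof. destruct x, y; simpl; intros ->. f_equal. apply proof_irrelevance. Qed.
Lemma PM_eq (x y : PM) : proj1_sig x = proj1_sig y -> x = y.
Proof. destruct x, y; simpl; intros ->. f_equal. apply proof_irrelevance. Qed.

Lemma Pdom_pf (m : PM) : fo M (fst (dom (fst (proj1_sig m)), dom (snd (proj1_sig m))))
  = fo M (snd (dom (fst (proj1_sig m)), dom (snd (proj1_sig m)))).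
Proof. destruct m as [[f f'] e]; simpl in *. rewrite <- !fm_dom, e. reflexivity. Qed.
Lemma Pcod_pf (m : PM) : fo M (fst (cod (fst (proj1_sig m)), cod (snd (proj1_sig m))))
  = fo M (snd (cod (fst (proj1_sig m)), cod (snd (proj1_sig m)))).
Proof. destruct m as [[f f'] e]; simpl in *. rewrite <- !fm_cod, e. reflexivity. Qed.
Definition Pdom (m : PM) : PO := exist _ _ (Pdom_pf m).
Definition Pcod (m : PM) : PO := exist _ _ (Pcod_pf m).
Lemma Pid_pf (x : PO) : fm M (fst (idm (fst (proj1_sig x)), idm (snd (proj1_sig x))))
  = fm M (snd (idm (fst (proj1_sig x)), idm (snd (proj1_sig x)))).
Proof. destruct x as [[a a'] e]; simpl in *. rewrite !fm_id, e. reflexivity. Qed.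
Definition Pid (x : PO) : PM := exist _ _ (Pid_pf x).

Lemma Pcomp_pf (g f : PM) (H : cod (fst (proj1_sig f)) = dom (fst (proj1_sig g))
   /\ cod (snd (proj1_sig f)) = dom (snd (proj1_sig g))) :
  fm M (fst (comp (fst (proj1_sig g)) (fst (proj1_sig f)), comp (snd (proj1_sig g)) (snd (proj1_sig f))))
  = fm M (snd (comp (fst (proj1_sig g)) (fst (proj1_sig f)), comp (snd (proj1_sig g)) (snd (proj1_sig f)))).
Proof.
  destruct g as [[g g'] eg], f as [[f f'] ef]; simpl in *. destruct H as [H1 H2].
  rewrite !fm_comp by assumption. rewrite eg, ef. reflexivity.
Qed.
Definition Pcomp (g f : PM) : PM :=
  match excluded_middle_informative (cod (fst (proj1_sig f)) = dom (fst (proj1_sig g))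
   /\ cod (snd (proj1_sig f)) = dom (snd (proj1_sig g))) with
  | left H => exist _ _ (Pcomp_pf g f H)
  | right _ => f
  end.

Lemma Pcomp_val {g f : PM} : Pcod f = Pdom g ->
  proj1_sig (Pcomp g f) = (comp (fst (proj1_sig g)) (fst (proj1_sig f)), comp (snd (proj1_sig g)) (snd (proj1_sig f))).
Proof.
  intro H. apply (f_equal (@proj1_sig _ _)) in H. simpl in H. injection H as H1 H2.
  unfold Pcomp. destruct excluded_middle_informative as [e|n]. reflexivity.
  exfalso; apply n; split; assumption.
Qed.

Lemma cpair {f g : PM} : Pcod f = Pdom g ->
  cod (fst (proj1_sig f)) = dom (fst (proj1_sig g)) /\ cod (snd (proj1_sig f)) = dom (snd (proj1_sig g)).
Proof. intro H. apply (f_equal (@proj1_sig _ _)) in H. simpl in H. injection H as H1 H2. auto. Qed.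

Definition PCat : Cat.
Proof.
  refine {| Ob := PO; Mor := PM; dom := Pdom; cod := Pcod; idm := Pid; comp := Pcomp |}.
  - intro x; apply PO_eq; destruct x as [[a a'] e]; simpl; rewrite !dom_id; reflexivity.
  - intro x; apply PO_eq; destruct x as [[a a'] e]; simpl; rewrite !cod_id; reflexivity.
  - intros f g H; apply PO_eq; simpl; rewrite (Pcomp_val H); simpl.
    destruct (cpair H). rewrite !dom_comp by assumption. reflexivity.
  - intros f g H; apply PO_eq; simpl; rewrite (Pcomp_val H); simpl.
    destruct (cpair H). rewrite !cod_comp by assumption. reflexivity.
  - intro f; apply PM_eq. rewrite Pcomp_val.
    + simpl. rewrite !comp_id_r. destruct f as [[]]; reflexivity.
    + apply PO_eq; simpl; rewrite !cod_id; reflexivity.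
  - intro f; apply PM_eq. rewrite Pcomp_val.
    + simpl. rewrite !comp_id_l. destruct f as [[]]; reflexivity.
    + apply PO_eq; simpl; rewrite !dom_id; reflexivity.
  - intros f g h H1 H2. apply PM_eq.
    assert (H3 : Pcod (Pcomp g f) = Pdom h).
    { apply PO_eq; simpl; rewrite (Pcomp_val H1); simpl. destruct (cpair H1).
      rewrite !cod_comp by assumption. exact (f_equal (@proj1_sig _ _) H2). }
    assert (H4 : Pcod f = Pdom (Pcomp h g)).
    { apply PO_eq; simpl; rewrite (Pcomp_val H2); simpl. destruct (cpair H2).
      rewrite !dom_comp by assumption. exact (f_equal (@proj1_sig _ _) H1). }
    rewrite (Pcomp_val H4), (Pcomp_val H3), (Pcomp_val H1), (Pcomp_val H2). simpl.
    destruct (cpair H1), (cpair H2). rewrite !comp_assoc by assumption. reflexivity.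
Defined.

Definition pi1 : Functor PCat A.
Proof.
  refine (@Build_Functor PCat A (fun x : PO => fst (proj1_sig x)) (fun m : PM => fst (proj1_sig m)) _ _ _ _).
  - reflexivity. - reflexivity. - reflexivity.
  - intros f g H. simpl in *. rewrite (Pcomp_val H). reflexivity.
Defined.
Definition pi2 : Functor PCat A.
Proof.
  refine (@Build_Functor PCat A (fun x : PO => snd (proj1_sig x)) (fun m : PM => snd (proj1_sig m)) _ _ _ _).
  - reflexivity. - reflexivity. - reflexivity.
  - intros f g H. simpl in *. rewrite (Pcomp_val H). reflexivity.
Defined.

Lemma pi_eq : functor_eq (fcomp M pi1) (fcomp M pi2).
Proof. split; simpl. intros [? e]; exact e. intros [? e]; exact e. Qed.

End KP.
Arguments PO {A B}. Arguments PM {A B}. Arguments PCat {A B}. Arguments Pid {A B}. Arguments Pdom {A B}. Arguments Pcod {A B}. Arguments Pcomp {A B}. Arguments PO_eq {A B M}. Arguments PM_eq {A B M}. Arguments pi1 {A B}. Arguments pi2 {A B}. Arguments Pcomp_val {A B M g f}.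

Lemma mono_inj (A B : Cat) (M : Functor A B) : mono_Cat M ->
  (forall a a', fo M a = fo M a' -> a = a') /\ (forall f f', fm M f = fm M f' -> f = f').
Proof.
  intro HM. destruct (HM _ _ _ (@pi_eq A B M)) as [H1 H2]. split.
  - intros a a' e. exact (H1 (exist _ (a, a') e)).
  - intros f f' e. exact (H2 (exist _ (f, f') e)).
Qed.

Section KPL.
Variables (A B : Cat) (M : Lens A B).

Lemma l1_pf (x : PO (get M)) (h : Mor A) (H : dom h = fst (proj1_sig x)) :
  fm (get M) (fst (h, put M (snd (proj1_sig x)) (fm (get M) h)))
  = fm (get M) (snd (h, put M (snd (proj1_sig x)) (fm (get M) h))).
Proof.
  destruct x as [[a a'] e]; simpl in *. rewrite put_get. reflexivity.
  rewrite fm_dom, H. exact e.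
Qed.
Definition l1put (x : PO (get M)) (h : Mor A) : PM (get M) :=
  match excluded_middle_informative (dom h = fst (proj1_sig x)) with
  | left H => exist _ _ (l1_pf x h H)
  | right _ => Pid (get M) x
  end.
Lemma l1put_val {x h} (H : dom h = fst (proj1_sig x)) :
  proj1_sig (l1put x h) = (h, put M (snd (proj1_sig x)) (fm (get M) h)).
Proof. unfold l1put. destruct excluded_middle_informative. reflexivity. contradiction. Qed.

Lemma l2_pf (x : PO (get M)) (h : Mor A) (H : dom h = snd (proj1_sig x)) :
  fm (get M) (fst (put M (fst (proj1_sig x)) (fm (get M) h), h))
  = fm (get M) (snd (put M (fst (proj1_sig x)) (fm (get M) h), h)).
Proof.
  destruct x as [[a a'] e]; simpl in *. rewrite put_get. reflexivity.
  rewrite fm_dom, H. symmetry; exact e.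
Qed.
Definition l2put (x : PO (get M)) (h : Mor A) : PM (get M) :=
  match excluded_middle_informative (dom h = snd (proj1_sig x)) with
  | left H => exist _ _ (l2_pf x h H)
  | right _ => Pid (get M) x
  end.
Lemma l2put_val {x h} (H : dom h = snd (proj1_sig x)) :
  proj1_sig (l2put x h) = (put M (fst (proj1_sig x)) (fm (get M) h), h).
Proof. unfold l2put. destruct excluded_middle_informative. reflexivity. contradiction. Qed.

Definition L1 : Lens (PCat (get M)) A.
Proof.
  refine {| get := pi1 (get M); put := l1put |}.
  - intros x b H. simpl in *. apply PO_eq. simpl. rewrite (l1put_val H). simpl.
    destruct x as [[a a'] e]; simpl in *. rewrite put_dom. rewrite H; reflexivity.
    rewrite fm_dom, H. exact e.
  - intros x b H. simpl in *. rewrite (l1put_val H). reflexivity.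
  - intros x. apply PM_eq. simpl. rewrite l1put_val by apply dom_id.
    destruct x as [[a a'] e]; simpl in *. rewrite fm_id, e, put_id. reflexivity.
  - intros x b b' H H'. simpl in *. apply PM_eq.
    assert (Hb : dom (fm (get M) b) = fo (get M) (snd (proj1_sig x)))
      by (rewrite fm_dom, H; exact (proj2_sig x)).
    pose proof (l1put_val H) as V1.
    rewrite V1 in H'. simpl in H'.
    assert (Hbc : dom (comp b' b) = fst (proj1_sig x)) by (rewrite dom_comp; [exact H| exact (eq_sym H')]).
    rewrite (l1put_val Hbc).
    assert (Hd : dom b' = fst (proj1_sig (Pcod (get M) (l1put x b)))) by (simpl; rewrite V1; exact H').
    pose proof (l1put_val Hd) as V2.
    assert (Hcod : cod (put M (snd (proj1_sig x)) (fm (get M) b)) = snd (proj1_sig (Pcod (get M) (l1put x b))))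
      by (simpl; rewrite V1; reflexivity).
    assert (Hm : dom (fm (get M) b') = fo (get M) (cod (put M (snd (proj1_sig x)) (fm (get M) b)))).
    { rewrite fm_dom, H', <- !fm_cod, put_get by exact Hb. reflexivity. }
    assert (Hc : Pcod (get M) (l1put x b) = Pdom (get M) (l1put (Pcod (get M) (l1put x b)) b')).
    { apply PO_eq. simpl. rewrite V2. simpl. rewrite V1. simpl. rewrite put_dom.
      - rewrite H'; reflexivity.
      - exact Hm. }
    rewrite (Pcomp_val Hc). rewrite V2. simpl. rewrite V1. simpl.
    rewrite fm_comp by exact (eq_sym H'). rewrite put_comp by assumption.
    reflexivity.
Defined.

Definition L2 : Lens (PCat (get M)) A.
Proof.
  refine {| get := pi2 (get M); put := l2put |}.
  - intros x b H. simpl in *. apply PO_eq. simpl. rewrite (l2put_val H). simpl.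
    destruct x as [[a a'] e]; simpl in *. rewrite put_dom. rewrite H; reflexivity.
    rewrite fm_dom, H. exact (eq_sym e).
  - intros x b H. simpl in *. rewrite (l2put_val H). reflexivity.
  - intros x. apply PM_eq. simpl. rewrite l2put_val by apply dom_id.
    destruct x as [[a a'] e]; simpl in *. rewrite fm_id, <- e, put_id. reflexivity.
  - intros x b b' H H'. simpl in *. apply PM_eq.
    assert (Hb : dom (fm (get M) b) = fo (get M) (fst (proj1_sig x)))
      by (rewrite fm_dom, H; exact (eq_sym (proj2_sig x))).
    pose proof (l2put_val H) as V1.
    rewrite V1 in H'. simpl in H'.
    assert (Hbc : dom (comp b' b) = snd (proj1_sig x)) by (rewrite dom_comp; [exact H| exact (eq_sym H')]).
    rewrite (l2put_val Hbc).
    assert (Hd : dom b' = snd (proj1_sig (Pcod (get M) (l2put x b)))) by (simpl; rewrite V1; exact H').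
    pose proof (l2put_val Hd) as V2.
    assert (Hcod : cod (put M (fst (proj1_sig x)) (fm (get M) b)) = fst (proj1_sig (Pcod (get M) (l2put x b))))
      by (simpl; rewrite V1; reflexivity).
    assert (Hm : dom (fm (get M) b') = fo (get M) (cod (put M (fst (proj1_sig x)) (fm (get M) b)))).
    { rewrite fm_dom, H', <- !fm_cod, put_get by exact Hb. reflexivity. }
    assert (Hc : Pcod (get M) (l2put x b) = Pdom (get M) (l2put (Pcod (get M) (l2put x b)) b')).
    { apply PO_eq. simpl. rewrite V2. simpl. rewrite V1. simpl. rewrite put_dom.
      - rewrite H'; reflexivity.
      - exact Hm. }
    rewrite (Pcomp_val Hc). rewrite V2. simpl. rewrite V1. simpl.
    rewrite fm_comp by exact (eq_sym H'). rewrite put_comp by assumption.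
    reflexivity.
Defined.

Lemma L12_eq : lens_eq (lcomp M L1) (lcomp M L2).
Proof.
  split.
  - split; simpl. intros [? e]; exact e. intros [? e]; exact e.
  - intros x c H. simpl in *. apply PM_eq.
    assert (H1 : dom (put M (fst (proj1_sig x)) c) = fst (proj1_sig x)) by (apply put_dom; exact H).
    assert (H2 : dom (put M (snd (proj1_sig x)) c) = snd (proj1_sig x))
      by (apply put_dom; rewrite H; exact (proj2_sig x)).
    rewrite (l1put_val H1), (l2put_val H2).
    rewrite !put_get; auto. rewrite H; exact (proj2_sig x).
Qed.

End KPL.

Theorem theorem3p1 : forall (A B : Cat) (M : Lens A B),
  mono_Lens M <-> mono_Cat (U M).
Proof.
  intros A B M. split.
  - intros HM X G H [E1 E2]. destruct (HM _ _ _ (@L12_eq A B M)) as [[F1 F2] _].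
    split.
    + intro x. exact (F1 (exist _ (fo G x, fo H x) (E1 x))).
    + intro f. exact (F2 (exist _ (fm G f, fm H f) (E2 f))).
  - intros HM X G H [[E1 E2] E3].
    destruct (mono_inj _ _ _ HM) as [I1 I2].
    assert (HG : functor_eq (get G) (get H)) by (apply HM; split; assumption).
    split; [exact HG|].
    intros x b Hb.
    assert (K : forall y (d : Mor A), dom d = y -> put M y (fm (get M) d) = d).
    { intros y d Hd. apply I2. rewrite put_get. reflexivity. rewrite fm_dom, Hd. reflexivity. }
    pose proof (E3 x (fm (get M) b)) as E. simpl in E.
    rewrite <- (proj1 HG x) in E.
    rewrite !K in E by exact Hb. apply E.
    rewrite fm_dom, Hb. reflexivity.
Qed.
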